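(* Let $p$ be a prime and $X$ a countable set. Every $\tau$-continuous $\mathbb{Z}_p$-linear map $A:\mathbb{Q}_p(X)\to\mathbb{Q}_p(X)$ is continuous with respect to the norm $\|\cdot\|$ on $\mathbb{Q}_p(X)$.
   Context: $\mathbb{Q}_p(X)$ is the set of maps $\xi:X\to\mathbb{Q}_p$ with $|\xi(i)|_p\le1$ for all but finitely many $i$, a $\mathbb{Z}_p$-module under coordinatewise operations, with the topology $\tau$ in which $A\subseteq\mathbb{Q}_p(X)$ is open iff for every finite $P\subseteq X$ the set $A\cap\big(\prod_{i\in P}\mathbb{Q}_p\times\prod_{j\in X\setminus P}\mathbb{Z}_p\big)$ is open in the product topology. The norm is $\|\xi\|=\max_{i\in X}|\xi(i)|_p$. *)

(* Defs.v *)
From HB Require Import structures.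
From mathcomp Require Import all_boot all_order all_algebra.
From mathcomp Require Import boolp classical_sets cardinality reals.
Set Implicit Arguments. Unset Strict Implicit. Unset Printing Implicit Defensive.
Import Order.TTheory GRing.Theory Num.Theory.
Local Open Scope ring_scope.
Local Open Scope classical_set_scope.

Section Padic.
Variables (R : realType) (K : fieldType) (nrm : K -> R).

(* (K, nrm) is the field Q_p of p-adic numbers with its p-adic absolute
   value, i.e. the completion of (Q, |.|_p): a field with a non-archimedean
   absolute value normalised by |p| = 1/p, complete, and in which Q is dense.
   These properties determine (K, nrm) up to a unique isometric isomorphism. *)
Definition nrm_cauchy (u : nat -> K) : Prop :=
  forall eps : R, 0 < eps -> exists N : nat, forall m n : nat,
    (N <= m)%N -> (N <= n)%N -> nrm (u m - u n) < eps.
Definition nrm_converges (u : nat -> K) (l : K) : Prop :=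
  forall eps : R, 0 < eps -> exists N : nat, forall n : nat,
    (N <= n)%N -> nrm (u n - l) < eps.

Record is_Qp (p : nat) : Prop := IsQp {
  Qp_prime : prime p;
  Qp_nrm_ge0 : forall x, 0 <= nrm x;
  Qp_nrm_eq0 : forall x, nrm x = 0 <-> x = 0;
  Qp_nrmM : forall x y, nrm (x * y) = nrm x * nrm y;
  Qp_nrm_ultra : forall x y, nrm (x + y) <= Num.max (nrm x) (nrm y);
  Qp_nrm_p : nrm (p%:R) = (p%:R)^-1;
  Qp_complete : forall u : nat -> K, nrm_cauchy u -> exists l, nrm_converges u l;
  Qp_rat_dense : forall (x : K) (eps : R), 0 < eps ->
    exists q : rat, nrm (x - ratr q) < eps
}.

Definition padic_int : set K := [set a | nrm a <= 1].

Variable X : Type.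

Definition QpX : set (X -> K) :=
  [set xi | finite_set [set i | 1 < nrm (xi i)]].

(* prod_{i in P} Q_p x prod_{j notin P} Z_p, as a subset of K^X *)
Definition boxP (P : set X) : set (X -> K) :=
  [set xi | forall j, ~ P j -> nrm (xi j) <= 1].

(* S is open in the subspace B of the product space K^X (product topology,
   each factor with the metric topology of nrm): every point of S has a
   basic product neighbourhood (finitely many coordinates constrained)
   whose trace on B lies in S. *)
Definition prod_open_in (B S : set (X -> K)) : Prop :=
  forall xi, S xi -> exists F : set X, finite_set F /\
    exists eps : R, 0 < eps /\
      forall eta, B eta -> (forall i, F i -> nrm (eta i - xi i) < eps) -> S eta.

Definition tau_open (U : set (X -> K)) : Prop :=
  U `<=` QpX /\
  forall P : set X, finite_set P -> prod_open_in (boxP P) (U `&` boxP P).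

(* ||xi|| = max_i |xi(i)|_p (a supremum, attained on Q_p(X)) *)
Definition qnorm (xi : X -> K) : R := sup (range (fun i => nrm (xi i))).

End Padic.

(* Main.v *)
From HB Require Import structures.
From mathcomp Require Import all_boot all_order all_algebra.
From mathcomp Require Import boolp classical_sets cardinality reals.
From mathcomp Require Import lra.
Require Import Defs.
Import Order.TTheory GRing.Theory Num.Theory.
Local Open Scope ring_scope.
Local Open Scope classical_set_scope.

Lemma seq_ub {R : realType} (s : seq R) : exists b : R, forall x, x \in s -> x <= b.
Proof.
elim: s => [|a s [b hb]]; first by exists 0.
exists (Num.max a b) => x; rewrite inE => /orP[/eqP->|/hb xb].
  by rewrite le_max lexx.
by rewrite le_max xb orbT.
Qed.

Lemma qnorm_ub (R : realType) (K : fieldType) (nrm : K -> R) (X : Type) (z : X -> K) :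
  QpX nrm z -> forall i, nrm (z i) <= qnorm nrm z.
Proof.
move=> Qz i; apply: ub_le_sup; last by exists i.
have /(finite_image (fun j => nrm (z j))) /finite_seqP [s hs] := Qz.
have [b hb] := seq_ub s.
exists (Num.max 1 b) => y [j _ <-].
have [h|h] := ltP 1 (nrm (z j)).
  have : [set` s] (nrm (z j)) by rewrite -hs; exists j.
  by move=> /= /hb jb; rewrite le_max jb orbT.
by rewrite le_max h.
Qed.

Lemma qnorm_le (R : realType) (K : fieldType) (nrm : K -> R) (X : Type) (z : X -> K) (b : R) :
  0 <= b -> (forall i, nrm (z i) <= b) -> qnorm nrm z <= b.
Proof.
move=> b0 hb; rewrite /qnorm.
have [ne|ne] := pselect (range (fun i => nrm (z i)) !=set0).
  by apply: ge_sup => // y [j _ <-].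
have -> : range (fun i => nrm (z i)) = set0.
  by apply/seteqP; split => y // hy; exfalso; apply: ne; exists y.
by rewrite sup0.
Qed.

Theorem lemma2p15 (R : realType) (K : fieldType) (nrm : K -> R) (p : nat)
  (hQp : is_Qp nrm p)
  (X : Type) (hX : exists f : X -> nat, injective f)
  (A : (X -> K) -> (X -> K))
  (hAdom : forall xi, QpX nrm xi -> QpX nrm (A xi))
  (hAadd : forall xi eta, QpX nrm xi -> QpX nrm eta ->
     A (fun i => xi i + eta i) = (fun i => A xi i + A eta i))
  (hAscal : forall (a : K) xi, padic_int nrm a -> QpX nrm xi ->
     A (fun i => a * xi i) = (fun i => a * A xi i))
  (hAcont : forall U, tau_open nrm U ->
     tau_open nrm [set xi | QpX nrm xi /\ U (A xi)]) :
  forall xi, QpX nrm xi -> forall eps : R, 0 < eps ->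
    exists delta : R, 0 < delta /\
      forall eta, QpX nrm eta -> qnorm nrm (fun i => eta i - xi i) < delta ->
        qnorm nrm (fun i => A eta i - A xi i) < eps.
Proof.
case: hQp => pr nge0 neq0 nM nU np _ _.
have n0 : nrm 0 = 0 by apply/neq0.
have n1 : nrm 1 = 1.
  have h := nM 1 1; rewrite mul1r in h.
  have nz : nrm 1 != 0 by apply/eqP => /neq0 /eqP; rewrite oner_eq0.
  by apply: (mulfI nz); rewrite mulr1 -h.
have nN : forall x, nrm (- x) = nrm x.
  have hm : nrm (-1) = 1.
    have h := nM (-1) (-1); rewrite mulrNN mulr1 n1 in h.
    have := nge0 (-1); nra.
  by move=> x; rewrite -mulN1r nM hm mul1r.
have nV : forall x, x != 0 -> nrm (x^-1) = (nrm x)^-1.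
  move=> x x0; have h := nM x x^-1; rewrite mulfV // n1 in h.
  have nx : nrm x != 0 by apply/eqP => /neq0 /eqP; rewrite (negbTE x0).
  by apply: (mulfI nx); rewrite -h mulfV.
have p0 : (0 < p)%N by apply: prime_gt0.
have p1 : (1 < p)%N by apply: prime_gt1.
have q0 : (p%:R : K) != 0.
  apply/eqP => /(congr1 nrm); rewrite np n0 => /eqP; rewrite invr_eq0 pnatr_eq0.
  by rewrite gtn_eqF.
have nX : forall l, nrm ((p%:R : K) ^+ l) = ((p ^ l)%:R)^-1.
  elim=> [|l IH]; first by rewrite expr0 n1 expn0 invr1.
  by rewrite exprS nM IH np expnS natrM invfM.
have qlnz : forall l, (p%:R : K) ^+ l != 0 by move=> l; rewrite expf_neq0.
have Q0 : QpX nrm (fun _ : X => (0:K)).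
  rewrite /QpX; apply: (@sub_finite_set _ _ set0); last exact: finite_set0.
  by move=> i /=; rewrite n0 ltr10.
have A0 : A (fun=> 0) = fun=> 0.
  have h := hAadd _ _ Q0 Q0.
  have e : (fun i : X => (0:K) + 0) = (fun=> 0) by apply/funext => i; rewrite addr0.
  rewrite e in h; apply/funext => i; have := congr1 (fun f => f i) h => /=.
  by move=> h'; apply: (addrI (A (fun=> 0) i)); rewrite addr0 -h'.
pose U : set (X -> K) := [set z | QpX nrm z /\ forall j, nrm (z j) <= 1].
have tU : tau_open nrm U.
  split; first by move=> z [].
  move=> P fP z [[Qz hz] bz]; exists P; split => //; exists 1; split => //.
  move=> eta beta heta; split => //; split.
    rewrite /QpX; apply: (sub_finite_set _ fP) => j /= hj; apply: contrapT => nPj.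
    by have := beta j nPj; rewrite leNgt hj.
  move=> j; have [Pj|nPj] := pselect (P j); last exact: beta.
  have -> : eta j = z j + (eta j - z j) by rewrite addrC subrK.
  apply: (le_trans (nU _ _)); rewrite ge_max hz /=.
  exact: ltW (heta j Pj).
have [_ tV] := hAcont _ tU.
have bs0 : forall z : X -> K, boxP nrm set0 z <-> forall j, nrm (z j) <= 1.
  by move=> z; split => h j //; apply: h.
have := tV set0 (finite_set0 _) (fun=> 0).
case.
  split; last by apply/bs0 => j; rewrite n0 ler01.
  split => //; rewrite A0; split => // j; by rewrite n0 ler01.
move=> F [_ [e [e0 He]]].
have keyA : forall z : X -> K, (forall j, nrm (z j) < Num.min e 1) ->
    QpX nrm z /\ forall j, nrm (A z j) <= 1.
  move=> z hz.
  have bz : boxP nrm set0 z by apply/bs0 => j; have := hz j; rewrite lt_min => /andP[_ /ltW].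
  have [[Qz [_ hA]] _] := He z bz (fun i _ => ltac:(rewrite subr0; have := hz i; rewrite lt_min => /andP[] //)).
  by [].
move=> xi Qxi eps eps0.
have [k hk] := ltr_add_invr eps0; rewrite add0r in hk.
set r : R := ((p ^ k)%:R)^-1.
have r0 : 0 < r by rewrite invr_gt0 ltr0n expn_gt0 p0.
have rle : r < eps.
  apply: le_lt_trans hk; rewrite lef_pV2 ?posrE ?ltr0n ?expn_gt0 ?p0 //.
  by rewrite ler_nat; apply: ltn_expl.
set c := Num.min e 1.
have c0 : 0 < c by rewrite lt_min e0 ltr01.
exists (c * r); split; first by rewrite mulr_gt0.
move=> eta Qeta hd.
pose d := fun i => eta i - xi i.
have Qd : QpX nrm d.
  have fU : finite_set ([set i | 1 < nrm (eta i)] `|` [set i | 1 < nrm (xi i)]).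
    by rewrite finite_setU; split.
  rewrite /QpX; apply: (sub_finite_set _ fU) => i /= hi.
  have [h1|h1] := ltP 1 (nrm (eta i)); first by left.
  have [h2|h2] := ltP 1 (nrm (xi i)); first by right.
  exfalso; move: hi; rewrite ltNge.
  by rewrite (le_trans (nU _ _)) // ge_max nN h1 h2.
have hdi : forall i, nrm (d i) < c * r.
  by move=> i; apply: le_lt_trans (@qnorm_ub _ _ _ _ _ Qd i) hd.
pose ez := fun i => ((p%:R : K) ^+ k)^-1 * d i.
have hez : forall j, nrm (ez j) < c.
  move=> j; rewrite /ez nM nV // nX invrK.
  rewrite -(ltr_pM2l r0) mulrA /r mulVf ?mul1r; first by rewrite mulrC hdi.
  by rewrite pnatr_eq0 expn_eq0 negb_and gtn_eqF.
have [Qez hAez] := keyA ez hez.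
have dE : d = fun i => ((p%:R : K) ^+ k) * ez i.
  by apply/funext => i; rewrite /ez mulrA mulfV // mul1r.
have Ad : A d = fun i => ((p%:R : K) ^+ k) * A ez i.
  rewrite dE hAscal //; rewrite /padic_int /= nX invf_le1 ?ltr0n ?expn_gt0 ?p0 //.
  by rewrite ler1n expn_gt0 p0.
have etaE : eta = fun i => xi i + d i.
  by apply/funext => i; rewrite /d addrC subrK.
have AE : (fun i => A eta i - A xi i) = A d.
  apply/funext => i; rewrite etaE hAadd //=; by rewrite addrC addKr.
rewrite AE; apply: le_lt_trans rle; apply: (@qnorm_le _ _ nrm); first exact: ltW.
move=> i; rewrite Ad nM nX -/r; rewrite -[leRHS]mulr1; apply: ler_wpM2l.
  exact: ltW.
exact: hAez.
Qed.
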